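(* Let $(F_n)_{n\ge 0}$ be the Fibonacci sequence with $F_0=0$, $F_1=1$, $F_n=F_{n-1}+F_{n-2}$, and let $b_n=\dfrac{F_{7n}}{13}$ for $n\ge 0$. For every integer $m\ge 0$, $$[\underbrace{29,29,\dots,29}_{m+1}]=\frac{b_{m+2}}{b_{m+1}},$$ where the continued fraction has $m+1$ entries all equal to $29$.
   Context: For numbers $a_0,a_1,\dots,a_m$, the finite simple continued fraction $[a_0,a_1,\dots,a_m]$ denotes $a_0+\cfrac{1}{a_1+\cfrac{1}{\ddots+\cfrac{1}{a_m}}}$, evaluated as a rational number; $[a_0]=a_0$. *)

(* Defs.v *)
From mathcomp Require Import all_boot all_order all_algebra.
Set Implicit Arguments. Unset Strict Implicit. Unset Printing Implicit Defensive.
Import Order.TTheory GRing.Theory Num.Theory.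
Local Open Scope ring_scope.

Fixpoint fib (n : nat) : nat :=
  match n with
  | 0 => 0
  | 1 => 1
  | (m.+1 as k).+1 => fib k + fib m
  end%N.

(* finite simple continued fraction [a_0, ..., a_m]; [a_0] = a_0.
   The empty list is never used in the statement (value 0 by convention). *)
Fixpoint cf (s : seq rat) : rat :=
  match s with
  | [::] => 0
  | [:: a] => a
  | a :: t => a + (cf t)^-1
  end.

Definition b (n : nat) : rat := (fib (7 * n))%:R / 13%:R.

(* Main.v *)
Require Import Defs.
From mathcomp Require Import all_boot all_order all_algebra zify ring lra.
Local Open Scope ring_scope.
Import GRing.Theory Num.Theory.

Lemma fibSS n : fib n.+2 = (fib n.+1 + fib n)%N.
Proof. by []. Qed.

Lemma fib14 n : fib (n + 14) = (29 * fib (n + 7) + fib n)%N.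
Proof.
have H : forall n, fib (n + 14) = (29 * fib (n + 7) + fib n)%N /\
                   fib (n.+1 + 14) = (29 * fib (n.+1 + 7) + fib n.+1)%N.
  elim=> [|k [IH1 IH2]]; first by split.
  split; first exact IH2.
  rewrite !addSn fibSS -!addSn IH2 IH1.
  rewrite !addSn fibSS /=. lia.
exact: (H n).1.
Qed.

Lemma fib_pos n : (0 < fib n.+1)%N.
Proof.
elim/ltn_ind: n => [[|[|k]]] IH //.
rewrite fibSS; apply: ltn_addr; exact: IH.
Qed.

Definition c (n : nat) : rat := (fib (7 * n))%:R.

Lemma c_neq0 n : c n.+1 != 0.
Proof.
rewrite /c pnatr_eq0 -lt0n mulnS addSn.
exact: fib_pos.
Qed.

Lemma c_rec n : c n.+3 = 29%:R * c n.+2 + c n.+1.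
Proof.
rewrite /c -natrM -natrD.
have -> : (7 * n.+3 = 7 * n.+1 + 14)%N by lia.
have -> : (7 * n.+2 = 7 * n.+1 + 7)%N by lia.
by rewrite fib14.
Qed.

Lemma cf_c m : cf (nseq m.+1 (29%:R : rat)) = c m.+2 / c m.+1.
Proof.
elim: m => [|m IH].
  have -> : c 2 = 29%:R * c 1 by rewrite /c -natrM.
  by rewrite mulfK // c_neq0.
have -> : cf (29%:R :: nseq m.+1 29%:R) = 29%:R + (cf (nseq m.+1 (29%:R:rat)))^-1 by [].
rewrite IH invf_div c_rec.
have h1 := c_neq0 m.+1.
have h0 := c_neq0 m.
by field.
Qed.

Theorem theorem8 (m : nat) :
  cf (nseq m.+1 (29%:R : rat)) = b m.+2 / b m.+1.
Proof.
rewrite cf_c /b -/(c m.+2) -/(c m.+1).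
have h := c_neq0 m.
by field.
Qed.
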